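(* Let $v\in\mathbb V^N$ be a component additive network game and $\rho\in\mathbb P^N$. Then $\mathbb E(v,\rho)=\sum_{h\in C(g(\rho))}\ \sum_{h'\subseteq h}\rho_h(h')\cdot v(h')$.
   Context: $N=\{1,\dots,n\}$ is a finite player set. A link is an unordered pair $ij=\{i,j\}$ of distinct players; $g_N$ is the set of all links; a network is any $g\subseteq g_N$; $\mathbb G^N$ is the set of all networks. For a network $g$, $N(g)$ is the set of players with at least one link in $g$. A component of $g$ is a nonempty subnetwork $h\subseteq g$ that is connected (any two players of $N(h)$ are joined by a path in $h$) and maximal (if $i\in N(h)$ and $ij\in g$ then $ij\in h$); $C(g)$ is the set of components of $g$ (empty for the empty network). A network formation probability distribution is $\rho\colon\mathbb G^N\to[0,1]$ with $\sum_g\rho(g)=1$; $\mathbb P^N$ is the set of these. $\mathbb G(\rho)=\{g:\rho(g)>0\}$, and the extent is $g(\rho)=\bigcup_{g\in\mathbb G(\rho)}g$. For a network $g$, the restriction $\rho_g$ is $\rho_g(h)=\sum_{h'\subseteq g_N\setminus g}\rho(h\cup h')$ if $h\subseteq g$ and $\rho_g(h)=0$ otherwise. A network game is $v\colon\mathbb G^N\to\mathbb R$ with $v(\varnothing)=0$; $\mathbb V^N$ is the set of these; $v$ is component additive if $v(g)=\sum_{h\in C(g)}v(h)$ for all $g$. The expected wealth is $\mathbb E(v,\rho)=\sum_{g\in\mathbb G^N}\rho(g)\,v(g)$. *)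

(* Defs.v *)
From mathcomp Require Import all_boot all_order all_algebra.
Set Implicit Arguments. Unset Strict Implicit. Unset Printing Implicit Defensive.
Import Order.TTheory GRing.Theory Num.Theory.
Local Open Scope ring_scope.

(* Players N = {0,...,n-1} (standing for {1,...,n}). *)
Definition link (n : nat) := {s : {set 'I_n} | #|s| == 2%N}.
Definition network (n : nat) := {set link n}.

Definition adj n (h : network n) : rel 'I_n :=
  fun i j => [exists l in h, val l == [set i; j]].

Definition players n (h : network n) : {set 'I_n} :=
  [set i | [exists l in h, i \in val l]].

Definition connectedb n (h : network n) : bool :=
  [forall i in players h, forall j in players h, connect (adj h) i j].

Definition maximalb n (g h : network n) : bool :=
  [forall i in players h, forall l in g, (i \in val l) ==> (l \in h)].

Definition components n (g : network n) : {set network n} :=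
  [set h : network n | [&& h != set0, h \subset g, connectedb h & maximalb g h]].

Definition is_distribution (R : numDomainType) n (rho : network n -> R) : Prop :=
  (forall g, 0 <= rho g <= 1) /\ \sum_(g : network n) rho g = 1.

Definition extent (R : numDomainType) n (rho : network n -> R) : network n :=
  \bigcup_(g : network n | 0 < rho g) g.

Definition restr (R : numDomainType) n (rho : network n -> R) (g : network n)
  (h : network n) : R :=
  if h \subset g then \sum_(h' : network n | h' \subset ~: g) rho (h :|: h') else 0.

Definition is_game (R : numDomainType) n (v : network n -> R) : Prop := v set0 = 0.

Definition component_additive (R : numDomainType) n (v : network n -> R) : Prop :=
  forall g : network n, v g = \sum_(h in components g) v h.

Definition expected_wealth (R : numDomainType) n (v rho : network n -> R) : R :=
  \sum_(g : network n) rho g * v g.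

(* Main.v *)
Require Import Defs.
From mathcomp Require Import all_boot all_order all_algebra.
Import GRing.Theory Num.Theory.
Module GraphLemmas.
Set Implicit Arguments. Unset Strict Implicit.

Section Graph.
Variable n : nat.
Implicit Types (g h G H : network n) (l : link n).

Lemma link2 l x : x \in val l -> exists y, val l = [set x; y].
Proof.
have /cards2P [a [b [ab E]]] := valP l.
rewrite E !inE => /orP[/eqP->|/eqP->]; first by exists b.
by exists a; rewrite setUC.
Qed.

Lemma link_ex l : exists x, x \in val l.
Proof.
have /cards2P [a [b [ab E]]] := valP l.
by exists a; rewrite E !inE eqxx.
Qed.

Lemma adj_link h l x y : l \in h -> val l = [set x; y] -> adj h x y.
Proof. by move=> Hl E; apply/existsP; exists l; rewrite Hl E eqxx. Qed.

Lemma adj_sym h : symmetric (adj h).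
Proof.
move=> x y; apply/existsP/existsP => -[l /andP[Hl /eqP E]];
by exists l; rewrite Hl E setUC eqxx.
Qed.

Lemma adjE h x y : adj h x y -> exists2 l, l \in h & val l = [set x; y].
Proof. by move/existsP => [l /andP[Hl /eqP E]]; exists l. Qed.

Lemma playersP h i : reflect (exists2 l, l \in h & i \in val l) (i \in players h).
Proof.
rewrite inE; apply: (iffP existsP) => [[l /andP[]]|[l H1 H2]]; first by exists l.
by exists l; rewrite H1 H2.
Qed.

Lemma adj_mono h1 h2 : h1 \subset h2 -> subrel (adj h1) (adj h2).
Proof. move=> S x y /adjE [l Hl E]; apply: adj_link E; exact: (subsetP S). Qed.

Lemma connect_mono h1 h2 x y : h1 \subset h2 -> connect (adj h1) x y -> connect (adj h2) x y.
Proof. move=> S; apply: connect_sub => a b /(adj_mono S); exact: connect1. Qed.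

Lemma connected_from h x :
  (forall a, a \in players h -> connect (adj h) x a) -> connectedb h.
Proof.
move=> Hx; apply/forallP => a; apply/implyP => Ha; apply/forallP => b; apply/implyP => Hb.
apply: (connect_trans (y := x)); last exact: Hx.
by rewrite (sym_connect_sym (@adj_sym h)); apply: Hx.
Qed.

Lemma connectedP h i j : connectedb h -> i \in players h -> j \in players h ->
  connect (adj h) i j.
Proof. by move=> /forallP/(_ i)/implyP H Hi Hj; move: (H Hi) => /forallP/(_ j)/implyP; apply. Qed.

Lemma maximalP G H i l : maximalb G H -> i \in players H -> l \in G -> i \in val l -> l \in H.
Proof.
move=> /forallP/(_ i)/implyP M Hi Hl Hil.
by move: (M Hi) => /forallP/(_ l)/implyP/(_ Hl)/implyP; apply.
Qed.

Lemma absorb G H1 H2 x : H1 \subset G -> connectedb H1 -> maximalb G H2 ->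
  x \in players H1 -> x \in players H2 -> H1 \subset H2.
Proof.
move=> S C M x1 x2.
have key y : connect (adj H1) x y -> y \in players H2.
  move/connectP => [p pth ->]; elim: p x x2 {x1} pth => //= z p IH a a2 /andP[e pth].
  apply: IH pth; case/adjE: e => l Hl E.
  have lH2 : l \in H2 by apply: (maximalP M a2 (subsetP S _ Hl)); rewrite E !inE eqxx.
  by apply/playersP; exists l => //; rewrite E !inE eqxx orbT.
apply/subsetP => l Hl; have [y Hy] := link_ex l.
have y1 : y \in players H1 by apply/playersP; exists l.
exact: (maximalP M (key _ (connectedP C x1 y1)) (subsetP S _ Hl) Hy).
Qed.

Lemma comp_ex G l : l \in G -> exists2 H, H \in components G & l \in H.
Proof.
move=> lG.
pose P H := [&& H \subset G, connectedb H & l \in H].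
have [x Hx] := link_ex l; have [y Exy] := link2 Hx.
have P1 : P [set l].
  rewrite /P sub1set lG set11 andbT /=.
  apply: (connected_from (x := x)) => a /playersP [l' ]; rewrite inE => /eqP -> .
  rewrite Exy !inE => /orP[/eqP->|/eqP->]; first exact: connect0.
  by apply: connect1; apply: (adj_link (l := l)); rewrite ?set11.
case: (@arg_maxnP _ [set l] P (fun H => #|H|) P1) => H0 /and3P[S0 C0 l0] Mx.
exists H0 => //; rewrite inE S0 C0 /=; apply/andP; split.
  by apply/set0Pn; exists l.
apply/forallP => i; apply/implyP => Hi; apply/forallP => l'; apply/implyP => l'G.
apply/implyP => il'; case: (boolP (l' \in H0)) => // nin.
have [z Ez] := link2 il'.
have PH' : P (l' |: H0).
  rewrite /P subUset sub1set l'G S0 !inE l0 orbT andbT /=.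
  rewrite andbT; apply: (connected_from (x := i)) => a /playersP [l'' ]; rewrite !inE => /orP[/eqP ->|l''H].
    rewrite Ez !inE => /orP[/eqP->|/eqP->]; first exact: connect0.
    by apply: connect1; apply: (adj_link (l := l')); rewrite ?inE ?eqxx.
  move=> al''; apply: (connect_mono (h1 := H0)); first exact: subsetUr.
  by apply: connectedP => //; apply/playersP; exists l''.
by have := Mx _ PH'; rewrite cardsU1 nin /= ltnn.
Qed.


Lemma compE g h : (h \in components g) =
  [&& h != set0, h \subset g, connectedb h & maximalb g h].
Proof. by rewrite inE. Qed.

Lemma comp_restrict G g H : g \subset G -> H \in components G ->
  components (g :&: H) = [set h in components g | h \subset H].
Proof.
move=> gG; rewrite compE => /and4P[_ HG _ MH].
apply/setP => h; rewrite !inE subsetI.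
apply/idP/idP.
  move=> /and4P[-> /andP[hg hH] -> Mh] /=; rewrite hg hH /= andbT.
  apply/forallP => i; apply/implyP => Hi; apply/forallP => l; apply/implyP => lg.
  apply/implyP => il; apply: (maximalP Mh Hi) => //.
  rewrite inE lg /=; apply: (maximalP MH _ (subsetP gG _ lg) il).
  move/playersP: Hi => [l' l'h il']; apply/playersP; exists l' => //.
  exact: (subsetP hH).
move=> /andP[/and4P[-> hg -> Mh] hH]; rewrite hg hH /=.
apply/forallP => i; apply/implyP => Hi; apply/forallP => l; apply/implyP.
rewrite inE => /andP[lg _]; apply/implyP => il; exact: (maximalP Mh Hi lg il).
Qed.

Lemma comp_unique G H1 H2 h : H1 \in components G -> H2 \in components G ->
  h != set0 -> h \subset H1 -> h \subset H2 -> H1 = H2.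
Proof.
rewrite !compE => /and4P[_ S1 C1 M1] /and4P[_ S2 C2 M2] /set0Pn [l lh] h1 h2.
have [x xl] := link_ex l.
have p1 : x \in players H1 by apply/playersP; exists l => //; exact: (subsetP h1).
have p2 : x \in players H2 by apply/playersP; exists l => //; exact: (subsetP h2).
by apply/eqP; rewrite eqEsubset (absorb S1 C1 M2 p1 p2) (absorb S2 C2 M1 p2 p1).
Qed.

Lemma comp_in G g h : g \subset G -> h \in components g ->
  exists2 H, H \in components G & h \subset H.
Proof.
move=> gG; rewrite compE => /and4P[/set0Pn [l lh] hg Ch _].
have lG : l \in G by apply: (subsetP gG); apply: (subsetP hg).
have [H HC lH] := comp_ex lG; exists H => //.
have [x xl] := link_ex l.
move: (HC); rewrite compE => /and4P[_ _ _ MH].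
apply: (absorb (subset_trans hg gG) Ch MH (x := x)); apply/playersP; by exists l.
Qed.

End Graph.
End GraphLemmas.
Import GraphLemmas.
Local Open Scope ring_scope.

Lemma decomp (R : realFieldType) (n : nat) (v : network n -> R) (G g : network n) :
  component_additive v -> g \subset G ->
  v g = \sum_(H in components G) v (g :&: H).
Proof.
move=> CA gG.
have E H : H \in components G ->
  v (g :&: H) = \sum_(h | (h \in components g) && (h \subset H)) v h.
  by move=> HC; rewrite CA (comp_restrict gG HC); apply: eq_bigl => h; rewrite inE.
rewrite (eq_bigr _ E) CA.
rewrite (exchange_big_dep (fun h => h \in components g)) /=; last by move=> ? ? _ /andP[].
apply: eq_bigr => h hC.
have [H0 H0C hH0] := comp_in gG hC.
rewrite (big_pred1 H0) // => H /=; rewrite hC /=.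
apply/idP/eqP => [/andP[HC hH]|->]; last by rewrite H0C hH0.
move: hC; rewrite compE => /andP[h0 _].
exact: (comp_unique HC H0C h0 hH hH0).
Qed.

Theorem proposition2 (R : realFieldType) (n : nat) (v rho : network n -> R) :
  is_game v -> component_additive v -> is_distribution rho ->
  expected_wealth v rho =
  \sum_(h in components (extent rho))
     \sum_(h' : network n | h' \subset h) restr rho h h' * v h'.
Proof.
move=> _ CA [rho01 _].
rewrite /expected_wealth.
have step1 g : rho g * v g =
    \sum_(H in components (extent rho)) rho g * v (g :&: H).
  have [->|nz] := eqVneq (rho g) 0.
    by rewrite mul0r big1 // => H _; rewrite mul0r.
  have gpos : 0 < rho g by rewrite lt0r nz; case/andP: (rho01 g).
  have gG : g \subset extent rho by rewrite /extent; apply: (bigcup_sup g).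
  by rewrite (@decomp R n v _ g CA gG) mulr_sumr.
rewrite (eq_bigr _ (fun g _ => step1 g)) exchange_big /=.
apply: eq_bigr => H HC.
rewrite (partition_big (fun g => g :&: H) (fun h' => h' \subset H)) /=;
  last by move=> g _; exact: subsetIr.
apply: eq_bigr => h' h'H.
rewrite /restr h'H mulr_suml.
rewrite (reindex_onto (fun j => h' :|: j) (fun g => g :\: H)); last first.
  by move=> g /eqP <-; exact: setID.
apply: eq_big => j.
  have A := subsetP h'H.
  apply/idP/idP.
    move=> /andP[_ /eqP <-]; apply/subsetP => x; rewrite !inE; by case/andP.
  move=> /subsetP B; rewrite /=; apply/andP; split; apply/eqP/setP => x; rewrite !inE;
  move: (A x) (B x); rewrite !inE;
  case: (x \in h'); case: (x \in j); case: (x \in H) => //= a b;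
  by [have := a isT | have := b isT].
by move=> /andP[/eqP -> _].
Qed.
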